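(* For every pair of compatible counting-star formulas $C_1,C_2$, the formula $\big(\bigvee_{C_3:\ \mathrm{ERes}(C_1,C_2,C_3)}C_3\big)\Rightarrow (C_1*C_2)$ is valid, i.e. every $L$-environment satisfying some counting-star formula $C_3$ with $\mathrm{ERes}(C_1,C_2,C_3)$ satisfies $C_1*C_2$.
   Context: BASE. Fix a finite vocabulary $L=\mathcal A\cup\mathcal F$ ($\mathcal A$ unary, $\mathcal F$ binary predicate symbols); equality is a logical symbol not in $\mathcal F$, always interpreted as identity. Formulas: first-order logic with equality, counting quantifiers $\exists^{\ge k}x.G$, $\exists^{=k}x.G$, and spatial conjunction $*$. An environment has a finite nonempty domain $D$, interpretations of the predicate symbols, and an assignment to variables. $\mathrm{split}\,e\,[e_1,\dots,e_r]$ (same domain, same variable assignment) holds iff for each predicate symbol $P$, $e(P)$ is the disjoint union of the $e_i(P)$; $[\![G_1*G_2]\!]e$ holds iff some $e_1,e_2$ with $\mathrm{split}\,e\,[e_1,e_2]$ satisfy $[\![G_1]\!]e_1$, $[\![G_2]\!]e_2$. $G\sim H$ means equal truth values in all environments. NORMAL FORMS. Atoms over distinct variables $u_1,\dots,u_p$ are $A(u_i)$, $f(u_i,u_j)$, $u_i=u_j$; a GCCAT formula over them contains for each such atom exactly one of the atom or its negation (nothing else), with $u_i=u_j$ positive iff $i=j$. Fix distinct $x_1,\dots,x_n$ and $x$. $\mathrm{ext}(x_1,\dots,x_n;x)$ is the set of conjunctions containing, for each atom over $x,x_1,\dots,x_n$ containing $x$, exactly one of the atom or its negation, with $x=x$ positive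 and $x=x_i$, $x_i=x$ negated. For $p\ge1$, $C_p=\{0,\dots,p-1,p^+\}$; $\exists^{c}x.G$ means $\exists^{=c}x.G$ for integer $c$ and $\exists^{\ge p}x.G$ for $c=p^+$. A counting-star formula is $C=E\wedge F\wedge\bigwedge_{i=1}^{k}\exists^{s_i}x.F'_i$ with $E=\bigwedge_{j=1}^m y_j=x_{i_j}$ ($y_j$ distinct variables not among $x,x_1,\dots,x_n$), $F$ GCCAT over $x_1,\dots,x_n$, $F'_1,\dots,F'_k$ an enumeration of $\mathrm{ext}(x_1,\dots,x_n;x)$, $s_i\in C_q$ for some $q\ge2$. Two counting-star formulas are compatible if they have the same equality part $E$ and GCCAT parts over the same $x_1,\dots,x_n$. OPERATIONS. $\mathrm{Pos}(T)$ is the set of non-equality positive literals of a conjunction $T$. For $T_1,T_2\in\mathrm{ext}$, $T_1\oplus T_2$ is defined iff $\mathrm{Pos}(T_1)\cap\mathrm{Pos}(T_2)=\emptyset$ and is the unique $T\in\mathrm{ext}$ with $\mathrm{Pos}(T)=\mathrm{Pos}(T_1)\cup\mathrm{Pos}(T_2)$; for GCCAT $F_1,F_2$ over $x_1,\dots,x_n$, $F_1\otimes F_2$ is defined iff $\mathrm{Pos}(F_1)\cap\mathrm{Pos}(F_2)=\emptyset$ and is the unique GCCAT $F$ with $\mathrm{Pos}(F)=\mathrm{Pos}(F_1)\cup\mathrm{Pos}(F_2)$. TRANSLATION. $L'=L\cup\{B_1,B_2\}$ (new unary symbols, split by $*$ like all others). $\mathrm{Mark}_\emptyset(x)=\neg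 B_1(x)\wedge\neg B_2(x)$, $\mathrm{Mark}_{\{1\}}(x)=B_1(x)\wedge\neg B_2(x)$, $\mathrm{Mark}_{\{2\}}(x)=\neg B_1(x)\wedge B_2(x)$, $\mathrm{Mark}_{\{1,2\}}(x)=B_1(x)\wedge B_2(x)$. $\mathcal E_0$: GCCAT over $x_1,\dots,x_n$ whose only positive literals are $x_i=x_i$; $\varnothing_x$: element of $\mathrm{ext}$ whose only positive literal is $x=x$; $\delta(x):=\bigwedge_i x\ne x_i$. $G_E:=\mathcal E_0\wedge\forall x.(\delta(x)\to\varnothing_x\wedge\mathrm{Mark}_\emptyset(x))$; $K(F):=F\wedge\forall x.(\delta(x)\to\varnothing_x\wedge\mathrm{Mark}_\emptyset(x))$; $\mathrm{Any}_m(T):=\mathcal E_0\wedge\forall x.(\delta(x)\to(T\wedge\mathrm{Mark}_m(x))\vee(\varnothing_x\wedge\mathrm{Mark}_\emptyset(x)))$; $\mathrm{One}_m(T):=\mathrm{Any}_m(T)\wedge\exists^{=1}x.(\delta(x)\wedge T\wedge\mathrm{Mark}_m(x))$. $X_m(\exists^{0}x.T):=G_E$, $X_m(\exists^{i+1}x.T):=\mathrm{One}_m(T)*X_m(\exists^{i}x.T)$, $X_m(\exists^{p^+}x.T):=X_m(\exists^{p}x.T)*\mathrm{Any}_m(T)$. $S_m(C):=E\wedge\big(K(F)*X_m(\exists^{s_1}x.F'_1)*\dots*X_m(\exists^{s_k}x.F'_k)\big)$. RULES (when $T_1\oplus T_2$ is defined): (1) $\mathrm{One}_{\{1\}}(T_1)*\mathrm{One}_{\{2\}}(T_2)\to\mathrm{One}_{\{1,2\}}(T_1\oplus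 T_2)$; (2) $\mathrm{One}_{\{1\}}(T_1)*\mathrm{Any}_{\{2\}}(T_2)\to\mathrm{One}_{\{1,2\}}(T_1\oplus T_2)*\mathrm{Any}_{\{2\}}(T_2)$; (3) $\mathrm{Any}_{\{1\}}(T_1)*\mathrm{One}_{\{2\}}(T_2)\to\mathrm{Any}_{\{1\}}(T_1)*\mathrm{One}_{\{1,2\}}(T_1\oplus T_2)$; (4) $\mathrm{Any}_{\{1\}}(T_1)*\mathrm{Any}_{\{2\}}(T_2)\to\mathrm{Any}_{\{1\}}(T_1)*\mathrm{Any}_{\{2\}}(T_2)*\mathrm{Any}_{\{1,2\}}(T_1\oplus T_2)$; (5) $\mathrm{Any}_{\{1\}}(T)\to G_E$; (6) $\mathrm{Any}_{\{2\}}(T)\to G_E$. DERIVATION. For compatible $C_1=E\wedge F_1\wedge\dots$, $C_2=E\wedge F_2\wedge\dots$, write $S_{\{1\}}(C_1)*S_{\{2\}}(C_2)$ as $E\wedge W$ where $W$ is the spatial conjunction of $K(F_1)$, $K(F_2)$ and all (unfolded) $\mathrm{One}_m$, $\mathrm{Any}_m$, $G_E$ conjuncts of the $X_{\{1\}}$ and $X_{\{2\}}$ parts. $E\wedge H$ is a derivation result if $H$ is obtained from $W$ by: first replacing $K(F_1)*K(F_2)$ by $K(F_1\otimes F_2)$ if defined, else by $\mathit{false}$; then applying finitely many rule instances of (1)–(6) to spatial sub-conjunctions, modulo associativity and commutativity of $*$, the unit law $G*G_E\sim G$ and idempotence $\mathrm{Any}_m(T)*\mathrm{Any}_m(T)\sim\mathrm{Any}_m(T)$,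 with all applications of (1)–(4) preceding those of (5)–(6); and such that finally, apart from the $K$-conjunct, $H$ contains only conjuncts $\mathrm{One}_{\{1,2\}}(T)$ and $\mathrm{Any}_{\{1,2\}}(T)$. $\mathrm{ERes}(C_1,C_2,C_3)$ holds for a counting-star formula $C_3$ (same variables, same $E$) iff $S_{\{1,2\}}(C_3)$ coincides, modulo the same identifications, with some derivation result of $S_{\{1\}}(C_1)*S_{\{2\}}(C_2)$. *)

(* Defs.v *)
From Stdlib Require Import Relations Permutation.
From mathcomp Require Import all_boot.
Set Implicit Arguments. Unset Strict Implicit. Unset Printing Implicit Defensive.

Inductive form (A F : Type) : Type :=
| FTrue | FFalse
| Un (a : A) (x : nat)
| Bin (f : F) (x y : nat)
| Eq (x y : nat)
| Not (g : form A F)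
| And (g h : form A F)
| Or (g h : form A F)
| Imp (g h : form A F)
| Ex (x : nat) (g : form A F)
| All (x : nat) (g : form A F)
| ExGe (k : nat) (x : nat) (g : form A F)
| ExEq (k : nat) (x : nat) (g : form A F)
| Star (g h : form A F).
Arguments FTrue {A F}. Arguments FFalse {A F}. Arguments Un {A F}.
Arguments Bin {A F}. Arguments Eq {A F}. Arguments Not {A F}. Arguments And {A F}.
Arguments Or {A F}. Arguments Imp {A F}. Arguments Ex {A F}. Arguments All {A F}.
Arguments ExGe {A F}. Arguments ExEq {A F}. Arguments Star {A F}.

(* Semantics.  An environment: a finite domain D (nonempty, since the *)
(* assignment rho : nat -> D is total), interpretations of unary and   *)
(* binary symbols, and an assignment.                                 *)
Definition upd (D : Type) (rho : nat -> D) (y : nat) (d : D) : nat -> D :=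
  fun z => if z == y then d else rho z.

Definition splitU (A D : finType) (u u1 u2 : {ffun A -> {set D}}) : bool :=
  [forall a, (u a == u1 a :|: u2 a) && [disjoint u1 a & u2 a]].
Definition splitB (F D : finType) (b b1 b2 : {ffun F -> {set D * D}}) : bool :=
  [forall f, (b f == b1 f :|: b2 f) && [disjoint b1 f & b2 f]].

Fixpoint sat (A F D : finType) (u : {ffun A -> {set D}}) (b : {ffun F -> {set D * D}})
    (rho : nat -> D) (g : form A F) {struct g} : bool :=
  match g with
  | FTrue => true
  | FFalse => false
  | Un a y => rho y \in u a
  | Bin f y z => (rho y, rho z) \in b f
  | Eq y z => rho y == rho z
  | Not g1 => ~~ sat u b rho g1
  | And g1 g2 => sat u b rho g1 && sat u b rho g2
  | Or g1 g2 => sat u b rho g1 || sat u b rho g2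
  | Imp g1 g2 => sat u b rho g1 ==> sat u b rho g2
  | Ex y g1 => [exists d : D, sat u b (upd rho y d) g1]
  | All y g1 => [forall d : D, sat u b (upd rho y d) g1]
  | ExGe k y g1 => k <= #|[set d : D | sat u b (upd rho y d) g1]|
  | ExEq k y g1 => #|[set d : D | sat u b (upd rho y d) g1]| == k
  | Star g1 g2 =>
      [exists u1 : {ffun A -> {set D}}, exists u2 : {ffun A -> {set D}},
       exists b1 : {ffun F -> {set D * D}}, exists b2 : {ffun F -> {set D * D}},
         [&& splitU u u1 u2, splitB b b1 b2, sat u1 b1 rho g1 & sat u2 b2 rho g2]]
  end.

(* Atoms and normal forms over fixed distinct variables x1..xn (xs) and *)
(* x.  A GCCAT formula / an element of ext(x1..xn;x) is determined by  *)
(* its set Pos of positive non-equality literals; we represent it by   *)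
(* that set and build the formula explicitly.                          *)
Notation gatom A F n := ((A * 'I_n) + (F * ('I_n * 'I_n)))%type.
(* non-equality atoms over x,x1..xn containing x:
   A(x), f(x,x), f(x,x_i), f(x_i,x) *)
Notation xatom A F n := ((((A + F) + (F * 'I_n)) + (F * 'I_n)))%type.

Definition bigAnd (A F : Type) (l : seq (form A F)) : form A F := foldr (@And A F) FTrue l.
Definition lit (A F : Type) (b : bool) (g : form A F) : form A F := if b then g else Not g.

Section Builders.
Variables (A F : finType) (n : nat) (xs : n.-tuple nat) (x : nat).

Definition gatom_form (a : gatom A F n) : form A F :=
  match a with
  | inl (p, i) => Un p (tnth xs i)
  | inr (f, (i, j)) => Bin f (tnth xs i) (tnth xs j)
  end.

Definition gform (P : {set gatom A F n}) : form A F :=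
  bigAnd ([seq lit (a \in P) (gatom_form a) | a <- enum [set: gatom A F n]] ++
          [seq lit (i == j) (@Eq A F (tnth xs i) (tnth xs j)) | i <- enum 'I_n, j <- enum 'I_n]).

Definition xatom_form (a : xatom A F n) : form A F :=
  match a with
  | inl (inl (inl p)) => Un p x
  | inl (inl (inr f)) => Bin f x x
  | inl (inr (f, i)) => Bin f x (tnth xs i)
  | inr (f, i) => Bin f (tnth xs i) x
  end.

Definition xform (T : {set xatom A F n}) : form A F :=
  bigAnd ([seq lit (a \in T) (xatom_form a) | a <- enum [set: xatom A F n]] ++
          [:: Eq x x] ++
          [seq Not (@Eq A F x (tnth xs i)) | i <- enum 'I_n] ++
          [seq Not (@Eq A F (tnth xs i) x) | i <- enum 'I_n]).
End Builders.

(* T1 (+) T2 and F1 (x) F2 : defined iff Pos sets are disjoint *)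
Definition oplus (X : finType) (T1 T2 : {set X}) : option {set X} :=
  if [disjoint T1 & T2] then Some (T1 :|: T2) else None.

(* CEq j : exists^{=j};  CGe p : exists^{>=p} (the value p^+ of C_p) *)
Inductive cnt := CEq (j : nat) | CGe (p : nat).

(* a counting-star formula (with the globally fixed x1..xn, x and E):
   its GCCAT part F and the counts s_T for every T in ext *)
Record cstar (A F : finType) (n : nat) := CStar {
  cs_F : {set gatom A F n};
  cs_s : {set xatom A F n} -> cnt }.

Definition cs_wf (A F : finType) (n : nat) (C : cstar A F n) : Prop :=
  exists q, 2 <= q /\
    forall T, match cs_s C T with CEq j => j < q | CGe p => p == q end.

Definition E_wf (n : nat) (xs : n.-tuple nat) (x : nat) (E : seq (nat * 'I_n)) : Prop :=
  uniq (map fst E) /\ forall e, e \in E -> e.1 \notin (x :: xs).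

Section CStarForm.
Variables (A F : finType) (n : nat) (xs : n.-tuple nat) (x : nat) (E : seq (nat * 'I_n)).

Definition Eform : form A F := bigAnd [seq @Eq A F e.1 (tnth xs e.2) | e <- E].

Definition cnt_form (c : cnt) (g : form A F) : form A F :=
  match c with CEq j => ExEq j x g | CGe p => ExGe p x g end.

Definition cs_form (C : cstar A F n) : form A F :=
  And Eform (And (gform xs (cs_F C))
    (bigAnd [seq cnt_form (cs_s C T) (xform xs x T) | T <- enum [set: {set xatom A F n}]])).
End CStarForm.

(* The translation S_m (over L' = L + {B1,B2}); B1 = inr false,        *)
(* B2 = inr true.  Given for reference: the derivation below works on  *)
(* the unfolded list of spatial conjuncts, represented symbolically.   *)
Inductive mark := M1 | M2 | M12.

Fixpoint liftL (A F : Type) (g : form A F) : form (A + bool) F :=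
  match g with
  | FTrue => FTrue | FFalse => FFalse
  | Un a y => Un (inl a) y | Bin f y z => Bin f y z | Eq y z => Eq y z
  | Not g1 => Not (liftL g1) | And g1 g2 => And (liftL g1) (liftL g2)
  | Or g1 g2 => Or (liftL g1) (liftL g2) | Imp g1 g2 => Imp (liftL g1) (liftL g2)
  | Ex y g1 => Ex y (liftL g1) | All y g1 => All y (liftL g1)
  | ExGe k y g1 => ExGe k y (liftL g1) | ExEq k y g1 => ExEq k y (liftL g1)
  | Star g1 g2 => Star (liftL g1) (liftL g2)
  end.

Section Translation.
Variables (A F : finType) (n : nat) (xs : n.-tuple nat) (x : nat) (E : seq (nat * 'I_n)).
Notation L' := (form (A + bool) F).

Definition Mark (m : option mark) : L' :=
  match m with
  | None => And (Not (Un (inr false) x)) (Not (Un (inr true) x))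
  | Some M1 => And (Un (inr false) x) (Not (Un (inr true) x))
  | Some M2 => And (Not (Un (inr false) x)) (Un (inr true) x)
  | Some M12 => And (Un (inr false) x) (Un (inr true) x)
  end.
Definition E0 : L' := liftL (gform xs set0).
Definition emptyx : L' := liftL (xform xs x set0).
Definition delta : L' := bigAnd [seq Not (@Eq (A + bool) F x (tnth xs i)) | i <- enum 'I_n].
Definition GE : L' := And E0 (All x (Imp delta (And emptyx (Mark None)))).
Definition Kf (P : {set gatom A F n}) : L' :=
  And (liftL (gform xs P)) (All x (Imp delta (And emptyx (Mark None)))).
Definition AnyF (m : mark) (T : {set xatom A F n}) : L' :=
  And E0 (All x (Imp delta (Or (And (liftL (xform xs x T)) (Mark (Some m)))
                                (And emptyx (Mark None))))).
Definition OneF (m : mark) (T : {set xatom A F n}) : L' :=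
  And (AnyF m T) (ExEq 1 x (And delta (And (liftL (xform xs x T)) (Mark (Some m))))).

Definition Xf (m : mark) (T : {set xatom A F n}) (c : cnt) : L' :=
  match c with
  | CEq j => iter j (Star (OneF m T)) GE
  | CGe p => Star (iter p (Star (OneF m T)) GE) (AnyF m T)
  end.

Definition Sf (m : mark) (C : cstar A F n) : L' :=
  And (liftL (Eform A F xs E))
    (foldl (fun acc T => Star acc (Xf m T (cs_s C T))) (Kf (cs_F C))
           (enum [set: {set xatom A F n}])).

(* symbolic spatial conjuncts (other than the K-conjunct) *)
Inductive conj :=
| CGE
| COne (m : mark) (T : {set xatom A F n})
| CAny (m : mark) (T : {set xatom A F n}).

Definition conj_form (c : conj) : L' :=
  match c with CGE => GE | COne m T => OneF m T | CAny m T => AnyF m T end.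

Definition Xlist (m : mark) (T : {set xatom A F n}) (c : cnt) : seq conj :=
  match c with
  | CEq j => nseq j (COne m T) ++ [:: CGE]
  | CGe p => nseq p (COne m T) ++ [:: CGE; CAny m T]
  end.

Definition Slist (m : mark) (C : cstar A F n) : seq conj :=
  flatten [seq Xlist m T (cs_s C T) | T <- enum [set: {set xatom A F n}]].

(* AC of *, unit law G * G_E ~ G (the K-conjunct is always present),
   idempotence Any_m(T) * Any_m(T) ~ Any_m(T) *)
Inductive ident_step : seq conj -> seq conj -> Prop :=
| id_perm l l' : Permutation l l' -> ident_step l l'
| id_unit_rm l : ident_step (CGE :: l) l
| id_unit_add l : ident_step l (CGE :: l)
| id_idem_rm m T l : ident_step (CAny m T :: CAny m T :: l) (CAny m T :: l)
| id_idem_add m T l : ident_step (CAny m T :: l) (CAny m T :: CAny m T :: l).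

Definition ident : seq conj -> seq conj -> Prop := clos_refl_trans _ ident_step.

Inductive rule14 : seq conj -> seq conj -> Prop :=
| r1 T1 T2 T : oplus T1 T2 = Some T ->
    rule14 [:: COne M1 T1; COne M2 T2] [:: COne M12 T]
| r2 T1 T2 T : oplus T1 T2 = Some T ->
    rule14 [:: COne M1 T1; CAny M2 T2] [:: COne M12 T; CAny M2 T2]
| r3 T1 T2 T : oplus T1 T2 = Some T ->
    rule14 [:: CAny M1 T1; COne M2 T2] [:: CAny M1 T1; COne M12 T]
| r4 T1 T2 T : oplus T1 T2 = Some T ->
    rule14 [:: CAny M1 T1; CAny M2 T2] [:: CAny M1 T1; CAny M2 T2; CAny M12 T].

Inductive rule56 : seq conj -> seq conj -> Prop :=
| r5 T : rule56 [:: CAny M1 T] [:: CGE]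
| r6 T : rule56 [:: CAny M2 T] [:: CGE].

(* applying a rule instance to a spatial sub-conjunction
   (the sub-conjunction is brought to the front by AC, i.e. ident) *)
Definition rstep (R : seq conj -> seq conj -> Prop) (l l' : seq conj) : Prop :=
  exists l0 lhs rhs, R lhs rhs /\ l = lhs ++ l0 /\ l' = rhs ++ l0.

Definition phase (R : seq conj -> seq conj -> Prop) : seq conj -> seq conj -> Prop :=
  clos_refl_trans _ (fun l l' => ident_step l l' \/ rstep R l l').

Definition is12 (c : conj) : Prop :=
  match c with COne M12 _ | CAny M12 _ => True | _ => False end.

(* H (besides the K-conjunct) is a derivation result from W:
   rules (1)-(4) first, then (5)-(6), everything modulo identifications *)
Definition derives (W H : seq conj) : Prop :=
  exists W', phase rule14 W W' /\ phase rule56 W' H /\ List.Forall is12 H.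

(* ERes(C1,C2,C3): K(F1)*K(F2) is replaced by K(F1 (x) F2), which must be
   defined and equal to the K-conjunct K(F3) of S_{1,2}(C3); the other
   conjuncts of S_{1,2}(C3) coincide modulo identifications with a
   derivation result from those of S_{1}(C1) * S_{2}(C2). *)
Definition ERes (C1 C2 C3 : cstar A F n) : Prop :=
  oplus (cs_F C1) (cs_F C2) = Some (cs_F C3) /\
  exists H, derives (Slist M1 C1 ++ Slist M2 C2) H /\ ident H (Slist M12 C3).
End Translation.

(* Main.v *)
From Pilot Require Import Defs.
From Stdlib Require Import Relations Permutation.
From mathcomp Require Import all_boot zify.
Set Implicit Arguments. Unset Strict Implicit. Unset Printing Implicit Defensive.

Section Comb.
Variables (A F : finType) (n : nat) (D : finType) (inD : pred D)
  (tau : D -> {set xatom A F n}).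
Notation X := {set xatom A F n}.
Notation cj := (conj A F n).
Notation cGE := (@CGE A F n).

Definition mk (m : mark) : nat := match m with M1 => 1 | M2 => 2 | M12 => 3 end.
Definition cm (c : cj) : nat :=
  match c with CGE => 0 | COne m _ => mk m | CAny m _ => mk m end.
Definition ctyp (c : cj) : X :=
  match c with CGE => set0 | COne _ T => T | CAny _ T => T end.

Definition cnt (P : seq (cj * {set D})) k (T : X) (d : D) : nat :=
  count (fun p : cj * {set D} => [&& cm p.1 == k, ctyp p.1 == T & d \in p.2]) P.

Definition setok (p : cj * {set D}) : Prop :=
  p.2 \subset inD /\
  match p.1 with CGE => p.2 = set0 | COne _ _ => #|p.2| = 1 | CAny _ _ => True end.

Definition okcnt (f : nat -> X -> nat) (t : X) : Prop :=
  (forall T, f 3 T = (T == t) :> nat /\ f 1 T = 0 /\ f 2 T = 0) \/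
  ((forall T, f 3 T = 0) /\ exists T1 T2, oplus T1 T2 = Some t /\
      forall T, f 1 T = (T == T1) :> nat /\ f 2 T = (T == T2) :> nat).

Definition Good (P : seq (cj * {set D})) : Prop :=
  (forall p, List.In p P -> setok p) /\
  forall d, inD d -> okcnt (fun k T => cnt P k T d) (tau d).

Definition real (l : seq cj) : Prop := exists P, map fst P = l /\ Good P.

Lemma okcnt_ext f g t : (forall T, f 1 T = g 1 T /\ f 2 T = g 2 T /\ f 3 T = g 3 T) -> okcnt f t -> okcnt g t.
Proof.
move=> e [H|[H1 [T1 [T2 [H2 H3]]]]]; [left|right].
  by move=> T; case: (e T) => <- [<- <-].
split; first by move=> T; case: (e T) => _ [_ <-].
by exists T1, T2; split=> // T; case: (e T) => <- [<- _].
Qed.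

Lemma okcnt_le1 f t k T : okcnt f t -> 0 < k < 4 -> f k T <= 1.
Proof.
case: k => [|[|[|[|k]]]] //= [H|[H1 [T1 [T2 [H2 H3]]]]] _.
- by case: (H T) => _ [-> _].
- by case: (H3 T) => -> _; case: (_ == _).
- by case: (H T) => _ [_ ->].
- by case: (H3 T) => _ ->; case: (_ == _).
- by case: (H T) => -> _; case: (_ == _).
- by rewrite H1.
Qed.

Lemma cnt_cat P Q k T d : cnt (P ++ Q) k T d = cnt P k T d + cnt Q k T d.
Proof. by rewrite /cnt count_cat. Qed.

Lemma cnt_perm P Q : Permutation P Q -> forall k T d, cnt P k T d = cnt Q k T d.
Proof.
elim => //= [p P' Q' _ IH|p q P'|P' Q' R' _ IH1 _ IH2] k T d.
- by rewrite /cnt /= -/(cnt _ _ _ _) IH.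
- by rewrite /cnt /= !addnA [X in X + _]addnC.
- by rewrite IH1 IH2.
Qed.

Lemma split_map (P : seq (cj * {set D})) l1 l2 : map fst P = l1 ++ l2 ->
  exists P1 P2, P = P1 ++ P2 /\ map fst P1 = l1 /\ map fst P2 = l2.
Proof.
move=> e; exists (take (size l1) P), (drop (size l1) P); rewrite cat_take_drop.
by rewrite map_take map_drop e take_size_cat // drop_size_cat.
Qed.

Lemma Good_cat_in P Q p : Good (P ++ Q) -> List.In p P -> setok p.
Proof. by case=> H _ Hp; apply: H; apply: List.in_or_app; left. Qed.


Lemma okcnt_m12 g c0 t T :
  okcnt (fun k T' => g k T' + c0 k T') t -> 0 < g 3 T ->
  t = T /\ (forall T', c0 3 T' = 0 /\ c0 1 T' = 0 /\ c0 2 T' = 0) /\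
  (forall T', g 1 T' = 0 /\ g 2 T' = 0).
Proof.
move=> [H|[H1 _]] gp; last by move: (H1 T) => e; lia.
have tT : t = T.
  by case: (H T) => e _; move: e; case: eqP => [->|_] //= e; lia.
subst t; split=> //; split=> T'; case: (H T') => e3 [e1 e2];
  move: e3; case: eqP => [E|_] /= e3; try subst T'; lia.
Qed.

Lemma okcnt_mk2 g c0 t T1 T2 :
  (forall T', g 3 T' = 0 /\ g 1 T' = (T' == T1) :> nat /\ g 2 T' = (T' == T2) :> nat) ->
  (forall T', c0 3 T' = 0 /\ c0 1 T' = 0 /\ c0 2 T' = 0) ->
  oplus T1 T2 = Some t -> okcnt (fun k T' => g k T' + c0 k T') t.
Proof.
move=> Hg Hc Ho; right; split.
  by move=> T'; case: (Hg T') => -> _; case: (Hc T') => ->.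
exists T1, T2; split=> // T'; case: (Hg T') => _ [-> ->]; case: (Hc T') => _ [-> ->].
by rewrite !addn0.
Qed.

Lemma Good_replace Pr Pl P0 :
  Good (Pr ++ P0) -> (forall p, List.In p Pl -> setok p) ->
  (forall d, inD d -> okcnt (fun k T => cnt Pr k T d + cnt P0 k T d) (tau d) ->
     okcnt (fun k T => cnt Pl k T d + cnt P0 k T d) (tau d)) ->
  Good (Pl ++ P0).
Proof.
move=> [H1 H2] Hl Ht; split.
  move=> p Hp; case: (List.in_app_or _ _ _ Hp) => {}Hp; first exact: Hl.
  by apply: H1; apply: List.in_or_app; right.
move=> d dD; apply: (okcnt_ext (f := fun k T => cnt Pl k T d + cnt P0 k T d)).
  by move=> T; rewrite !cnt_cat.
apply: Ht => //; apply: (okcnt_ext _ (H2 d dD)) => T; by rewrite !cnt_cat.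
Qed.

Lemma Good_perm P Q : Permutation P Q -> Good P -> Good Q.
Proof.
move=> pe [H1 H2]; split.
  by move=> p Hp; apply: H1; apply: (Permutation_in _ (Permutation_sym pe)).
move=> d dD; apply: (okcnt_ext _ (H2 d dD)) => T; by rewrite !(cnt_perm pe).
Qed.

Lemma seqmap_map (T1 T2 : Type) (f : T1 -> T2) l : map f l = List.map f l.
Proof. by elim: l => //= a l ->. Qed.

Lemma setok1 c S : setok (c, S) -> (match c with COne _ _ => True | _ => False end) ->
  exists d0, S = [set d0].
Proof. by case: c => // m T [_ /= /eqP/cards1P]. Qed.


Lemma subUp (S1 S2 : {set D}) : S1 \subset inD -> S2 \subset inD -> S1 :|: S2 \subset inD.
Proof.
move=> /subsetP h1 /subsetP h2; apply/subsetP => z; rewrite in_setU => /orP[]; by [apply: h1|apply: h2].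
Qed.

Lemma sub0p : (set0 : {set D}) \subset inD.
Proof. by apply/subsetP => z; rewrite in_set0. Qed.

Lemma sub1p e : inD e -> [set e] \subset inD.
Proof. by move=> h; apply/subsetP => z; rewrite in_set1 => /eqP ->. Qed.

Lemma In_setok P p : Good P -> List.In p P -> setok p.
Proof. by case=> H _; apply: H. Qed.

Lemma rule14_back (l l' : seq cj) : rstep (@rule14 A F n) l l' -> real l' -> real l.
Proof.
move=> [l0 [lhs [rhs [R [-> ->]]]]] [P [eP GP]].
case: (split_map eP) => Pr [P0 [eP' [er e0]]]; subst P.
case: R er => T1 T2 T Ho er.
- clear eP; case: Pr er GP => [|[c S] [|]] //= [ec] GP; subst c.
  have ok1 : setok (COne M12 T, S) by apply: (In_setok GP); left.
  case: (setok1 ok1 I) => d0 eS; subst S.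
  exists ([:: (COne M1 T1, [set d0]); (COne M2 T2, [set d0])] ++ P0).
  split; first by rewrite map_cat e0.
  apply: (Good_replace (Pr := [:: (COne M12 T, [set d0])]) GP).
    by move=> p [<-|[<-|[]]]; case: ok1 => s1 _; split=> //=; rewrite cards1.
  move=> d dD Hok; case: (d =P d0) => [ed|ne].
    subst d.
    case: (okcnt_m12 Hok (T := T)); first by rewrite /cnt /= !eqxx in_set1 eqxx.
    move=> et [Hc _]; rewrite et.
    apply: (okcnt_mk2 (T1 := T1) (T2 := T2)) => //.
    by move=> T'; rewrite /cnt /= in_set1 eqxx (eq_sym T1) (eq_sym T2) !andbT !addn0.
  apply: (okcnt_ext _ Hok) => T'; rewrite /cnt /= in_set1 (introF eqP ne).
  by case: (T1 == T'); case: (T2 == T'); case: (T == T').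
- clear eP; case: Pr er GP => [|[c S] [|[c2 S2] [|]]] //= [ec ec2] GP; subst c c2.
  have ok1 : setok (COne M12 T, S) by apply: (In_setok GP); left.
  have ok2 : setok (CAny M2 T2, S2) by apply: (In_setok GP); right; left.
  case: (setok1 ok1 I) => d0 eS; subst S.
  exists ([:: (COne M1 T1, [set d0]); (CAny M2 T2, S2 :|: [set d0])] ++ P0).
  split; first by rewrite map_cat e0.
  apply: (Good_replace (Pr := [:: (COne M12 T, [set d0]); (CAny M2 T2, S2)]) GP).
    case: ok1 => s1 _; case: ok2 => s2 _.
    by move=> p [<-|[<-|[]]]; split=> //=; rewrite ?cards1 //; apply: subUp.
  move=> d dD Hok; case: (d =P d0) => [ed|ne].
    subst d.
    case: (okcnt_m12 Hok (T := T)); first by rewrite /cnt /= !eqxx in_set1 eqxx.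
    move=> et [Hc Hg]; rewrite et.
    have nS : d0 \notin S2.
      by case: (Hg T2) => _; rewrite /cnt /= !eqxx /=; case: (d0 \in S2).
    apply: (okcnt_mk2 (T1 := T1) (T2 := T2)) => //.
    move=> T'; rewrite /cnt /= in_setU in_set1 eqxx (negbTE nS) (eq_sym T1) (eq_sym T2).
    by case: (T' == T1); case: (T' == T2).
  apply: (okcnt_ext _ Hok) => T'; rewrite /cnt /= in_setU in_set1 (introF eqP ne) orbF.
  by case: (T1 == T'); case: (T2 == T'); case: (T == T').
- clear eP; case: Pr er GP => [|[c S1] [|[c2 S] [|]]] //= [ec ec2] GP; subst c c2.
  have ok1 : setok (COne M12 T, S) by apply: (In_setok GP); right; left.
  have ok2 : setok (CAny M1 T1, S1) by apply: (In_setok GP); left.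
  case: (setok1 ok1 I) => d0 eS; subst S.
  exists ([:: (CAny M1 T1, S1 :|: [set d0]); (COne M2 T2, [set d0])] ++ P0).
  split; first by rewrite map_cat e0.
  apply: (Good_replace (Pr := [:: (CAny M1 T1, S1); (COne M12 T, [set d0])]) GP).
    case: ok1 => s1 _; case: ok2 => s2 _.
    by move=> p [<-|[<-|[]]]; split=> //=; rewrite ?cards1 //; apply: subUp.
  move=> d dD Hok; case: (d =P d0) => [ed|ne].
    subst d.
    case: (okcnt_m12 Hok (T := T)); first by rewrite /cnt /= !eqxx in_set1 eqxx addnC.
    move=> et [Hc Hg]; rewrite et.
    have nS : d0 \notin S1.
      by case: (Hg T1) => + _; rewrite /cnt /= !eqxx /=; case: (d0 \in S1).
    apply: (okcnt_mk2 (T1 := T1) (T2 := T2)) => //.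
    move=> T'; rewrite /cnt /= in_setU in_set1 eqxx (negbTE nS) (eq_sym T1) (eq_sym T2).
    by case: (T' == T1); case: (T' == T2).
  apply: (okcnt_ext _ Hok) => T'; rewrite /cnt /= in_setU in_set1 (introF eqP ne) orbF.
  by case: (T1 == T'); case: (T2 == T'); case: (T == T').
- clear eP; case: Pr er GP => [|[c S1] [|[c2 S2] [|[c3 S] [|]]]] //= [ec ec2 ec3] GP; subst c c2 c3.
  have ok1 : setok (CAny M1 T1, S1) by apply: (In_setok GP); left.
  have ok2 : setok (CAny M2 T2, S2) by apply: (In_setok GP); right; left.
  have ok3 : setok (CAny M12 T, S) by apply: (In_setok GP); right; right; left.
  exists ([:: (CAny M1 T1, S1 :|: S); (CAny M2 T2, S2 :|: S)] ++ P0).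
  split; first by rewrite map_cat e0.
  apply: (Good_replace (Pr := [:: (CAny M1 T1, S1); (CAny M2 T2, S2); (CAny M12 T, S)]) GP).
    case: ok1 => s1 _; case: ok2 => s2 _; case: ok3 => s3 _.
    by move=> p [<-|[<-|[]]]; split=> //=; apply: subUp.
  move=> d dD Hok; case dS: (d \in S).
    case: (okcnt_m12 Hok (T := T)); first by rewrite /cnt /= !eqxx dS.
    move=> et [Hc Hg]; rewrite et.
    have nS1 : d \notin S1.
      by case: (Hg T1) => + _; rewrite /cnt /= !eqxx /=; case: (d \in S1).
    have nS2 : d \notin S2.
      by case: (Hg T2) => _; rewrite /cnt /= !eqxx /=; case: (d \in S2).
    apply: (okcnt_mk2 (T1 := T1) (T2 := T2)) => //.
    move=> T'; rewrite /cnt /= !in_setU dS !orbT (eq_sym T1) (eq_sym T2).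
    by case: (T' == T1); case: (T' == T2).
  apply: (okcnt_ext _ Hok) => T'; rewrite /cnt /= !in_setU dS !orbF.
  by case: (T1 == T'); case: (T2 == T'); case: (T == T').
Qed.

Lemma cnt_cons0 c P k T d : cnt ((c, set0) :: P) k T d = cnt P k T d.
Proof. by rewrite /cnt /= in_set0 !andbF. Qed.

Lemma rule56_back (l l' : seq cj) : rstep (@rule56 A F n) l l' -> real l' -> real l.
Proof.
move=> [l0 [lhs [rhs [R [-> ->]]]]] [P [eP GP]].
case: (split_map eP) => Pr [P0 [eP' [er e0]]]; subst P.
case: R er => T er; clear eP; case: Pr er GP => [|[c S] [|]] //= [ec] GP; subst c;
  have [s1 eS] : setok (cGE, S) by apply: (In_setok GP); left.
- rewrite /= in eS; subst S; exists ((CAny M1 T, set0) :: P0); split; first by rewrite /= e0.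
  apply: (Good_replace (Pr := [:: (cGE, set0)]) (Pl := [:: (CAny M1 T, set0)]) GP).
    by move=> p [<-|[]]; split.
  by move=> d dD; apply: okcnt_ext => T'; rewrite !cnt_cons0.
- rewrite /= in eS; subst S; exists ((CAny M2 T, set0) :: P0); split; first by rewrite /= e0.
  apply: (Good_replace (Pr := [:: (cGE, set0)]) (Pl := [:: (CAny M2 T, set0)]) GP).
    by move=> p [<-|[]]; split.
  by move=> d dD; apply: okcnt_ext => T'; rewrite !cnt_cons0.
Qed.

Lemma mk_range m : 0 < mk m < 4.
Proof. by case: m. Qed.

Lemma ident_back (l l' : seq cj) : ident_step l l' -> real l' -> real l.
Proof.
case=> {l l'}.
- move=> l l' pe [P [eP GP]].
  have pe' : Permutation l (List.map fst P) by rewrite -seqmap_map eP.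
  case: (@Permutation_map_inv _ _ fst l P pe') => P' [el pP].
  by exists P'; split; [rewrite seqmap_map | apply: (Good_perm pP)].
- move=> l [P [eP GP]]; exists ((cGE, set0) :: P); split; first by rewrite /= eP.
  case: GP => H1 H2; split.
    by move=> p [<-|Hp]; [split; [apply: sub0p|] | apply: H1].
  by move=> d dD; apply: (okcnt_ext _ (H2 d dD)) => T; rewrite !cnt_cons0.
- move=> l [[|[c S] P] [//= [ec eP] GP]]; subst c.
  have [_ eS] : setok (cGE, S) by apply: (In_setok GP); left.
  rewrite /= in eS; subst S; exists P; split=> //.
  case: GP => H1 H2; split; first by move=> p Hp; apply: H1; right.
  by move=> d dD; apply: (okcnt_ext _ (H2 d dD)) => T; rewrite !cnt_cons0.
- move=> m T l [[|[c S] P] [//= [ec eP] GP]]; subst c.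
  exists ((CAny m T, S) :: (CAny m T, set0) :: P); split; first by rewrite /= eP.
  apply: (Good_replace (Pr := [:: (CAny m T, S)]) (Pl := [:: (CAny m T, S); (CAny m T, set0)]) GP).
    have [s1 _] : setok (CAny m T, S) by apply: (In_setok GP); left.
    by move=> p [<-|[<-|[]]]; split=> //; apply: sub0p.
  move=> d dD; apply: okcnt_ext => T'.
  by rewrite /cnt /= in_set0 !andbF !addn0.
- move=> m T l [[|[c S1] [|[c2 S2] P]] [//= [ec ec2 eP] GP]]; subst c c2.
  exists ((CAny m T, S1 :|: S2) :: P); split; first by rewrite /= eP.
  apply: (Good_replace (Pr := [:: (CAny m T, S1); (CAny m T, S2)]) (Pl := [:: (CAny m T, S1 :|: S2)]) GP).
    have [s1 _] : setok (CAny m T, S1) by apply: (In_setok GP); left.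
    have [s2 _] : setok (CAny m T, S2) by apply: (In_setok GP); right; left.
    by move=> p [<-|[]]; split=> //; apply: subUp.
  move=> d dD Hok.
  have := okcnt_le1 T Hok (mk_range m); rewrite /cnt /= !eqxx /= => le.
  apply: (okcnt_ext _ Hok) => T'; rewrite /cnt /= in_setU.
  move: le; case: (d \in S1); case: (d \in S2) => //= _.
  all: by rewrite ?orbF ?andbF ?andbT ?addn0.
Qed.

Lemma phase_back (R : seq cj -> seq cj -> Prop) :
  (forall l l', rstep R l l' -> real l' -> real l) ->
  forall l l', phase R l l' -> real l' -> real l.
Proof.
move=> HR l l'; elim=> //.
- by move=> a b [H|H]; [apply: ident_back|apply: HR].
- by move=> a b c _ I1 _ I2 H; apply: I1; apply: I2.
Qed.

Lemma ident_real (l l' : seq cj) : ident l l' -> real l' -> real l.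
Proof.
elim=> //.
- by move=> a b H; apply: ident_back.
- by move=> a b c _ I1 _ I2 H; apply: I1; apply: I2.
Qed.

Lemma derives_real W H : derives W H -> real H -> real W.
Proof.
case=> W' [p1 [p2 _]] rH.
apply: (phase_back rule14_back p1); exact: (phase_back rule56_back p2).
Qed.

Definition sel k T (c : cj) : bool := (cm c == k) && (ctyp c == T).
Definition cone (c : cj) : bool := if c is COne _ _ then true else false.
Definition jp (c : Pilot.Defs.cnt) : nat := match c with CEq j => j | CGe p => p end.
Definition cntok (c : Pilot.Defs.cnt) (N : nat) : bool := match c with CEq j => N == j | CGe p => p <= N end.

Lemma count_Slist (m : mark) (C : cstar A F n) (pr : cj -> bool) :
  count pr (Slist m C) = \sum_(T in [set: X]) count pr (Xlist m T (cs_s C T)).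
Proof. by rewrite /Slist count_flatten sumnE !big_map big_enum. Qed.

Lemma count_Xlist_zero m T' c k T q : 0 < k -> ~~ ((mk m == k) && (T' == T)) ->
  count (fun c0 => sel k T c0 && q c0) (Xlist m T' c) = 0.
Proof.
move=> k0 H; case: c => j /=; rewrite count_cat count_nseq /sel /=;
  move/negbTE: H => ->; rewrite /= ?(eq_sym 0) (gtn_eqF k0) //.
Qed.

Lemma count_Slist_sel m C k T q : 0 < k ->
  count (fun c0 => sel k T c0 && q c0) (Slist m C) =
  if mk m == k then count (fun c0 => sel k T c0 && q c0) (Xlist m T (cs_s C T)) else 0.
Proof.
move=> k0; rewrite count_Slist; case: eqP => e.
  rewrite (bigD1 T) //=.
  suff -> : (\sum_(T' in [set: X] | T' != T) count (fun c0 => sel k T c0 && q c0) (Xlist m T' (cs_s C T'))) = 0 by rewrite addn0.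
  apply: big1 => T' /andP[_ ne]; apply: count_Xlist_zero => //.
  by rewrite (negbTE ne) andbF.
  by rewrite in_setT.
apply: big1 => T' _; apply: count_Xlist_zero => //; by move/eqP/negbTE: e => ->.
Qed.

Lemma count_X_one m T c : count (fun c0 => sel (mk m) T c0 && cone c0) (Xlist m T c) = jp c.
Proof.
case: c => j /=; rewrite count_cat count_nseq /sel /= !eqxx /= ?muln1 //.
all: by rewrite mul1n andbF !addn0.
Qed.

Lemma count_X_any m T j : count (fun c0 => sel (mk m) T c0 && ~~ cone c0) (Xlist m T (CEq j)) = 0.
Proof. by rewrite /= count_cat count_nseq /sel /= !eqxx /=; case: m. Qed.

Lemma cnt_out P k T d : Good P -> ~~ inD d -> cnt P k T d = 0.
Proof.
case=> H _ nd; elim: P H => //= [[c S] P IH] H.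
rewrite /cnt /= -/(cnt P k T d) IH; last by move=> p Hp; apply: H; right.
have [s _] : setok (c, S) by apply: H; left.
suff -> : d \in S = false by rewrite !andbF.
by apply/negP => /(subsetP s); apply/negP.
Qed.

Lemma cnt_le P k T d : cnt P k T d <= count (sel k T) (map fst P).
Proof. by rewrite count_map; apply: sub_count => p /=; rewrite /sel andbA => /andP[]. Qed.

Lemma sum_sel P k T :
  \sum_(d : D) cnt P k T d = \sum_(p <- P) sel k T p.1 * #|p.2|.
Proof.
elim: P => [|[c S] P IH]; first by rewrite big_nil big1.
rewrite big_cons -IH /cnt /= big_split /=; congr addn.
rewrite /sel; under eq_bigr do rewrite andbA. case: (_ && _) => /=; last by rewrite mul0n big1.
rewrite mul1n -sum1_card; symmetry; rewrite big_mkcond /=; apply: eq_bigr => i _; by case: (i \in S).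
Qed.

Lemma sum_split P k T : Good P ->
  \sum_(p <- P) sel k T p.1 * #|p.2| =
  count (fun c => sel k T c && cone c) (map fst P) +
  \sum_(p <- P) (sel k T p.1 && ~~ cone p.1) * #|p.2|.
Proof.
case=> H _; elim: P H => [|[c S] P IH] H; first by rewrite !big_nil.
rewrite !big_cons /= IH; last by move=> p Hp; apply: H; right.
have [_ s] : setok (c, S) by apply: H; left.
clear H; case: c s => [|m T'|m T'] /= s; case: (sel k T _) => /=; rewrite ?s ?cards0; lia.
Qed.

Lemma sum_zero (P : seq (cj * {set D})) k T :
  count (fun c => sel k T c && ~~ cone c) (map fst P) = 0 ->
  \sum_(p <- P) (sel k T p.1 && ~~ cone p.1) * #|p.2| = 0.
Proof.
elim: P => [|[c S] P IH]; first by rewrite big_nil.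
rewrite big_cons /=; case: (_ && _) => //= H; by rewrite IH.
Qed.

Lemma cntok_gen P k T c (tk : D -> X) : Good P ->
  (forall d, inD d -> cnt P k T d = (tk d == T) :> nat) ->
  count (fun c0 => sel k T c0 && cone c0) (map fst P) = jp c ->
  (forall j, c = CEq j -> count (fun c0 => sel k T c0 && ~~ cone c0) (map fst P) = 0) ->
  cntok c #|[set d | inD d && (tk d == T)]|.
Proof.
move=> GP Ht Hone Hany.
have -> : #|[set d | inD d && (tk d == T)]| = \sum_(d : D) cnt P k T d.
  rewrite -sum1_card big_mkcond /=; apply: eq_bigr => d _.
  rewrite inE; case dD: (inD d) => /=; first by rewrite Ht //; case: (_ == _).
  by rewrite cnt_out // dD.
rewrite sum_sel (sum_split _ _ GP) Hone.
case: c Hone Hany => j _ Ha /=; last by apply: leq_addr.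
by rewrite sum_zero ?addn0 // (Ha j).
Qed.

Definition tauk (P : seq (cj * {set D})) k d : X := odflt set0 [pick T | cnt P k T d == 1].

Lemma pick_eq P k d T1 : (forall T, cnt P k T d = (T == T1) :> nat) -> tauk P k d = T1.
Proof.
move=> H; rewrite /tauk; case: pickP => [T|none] /=.
  by move=> h; apply/eqP; move: h; rewrite H; case: (T == T1).
by move: (none T1); rewrite H eqxx.
Qed.

Lemma extract P (C1 C2 : cstar A F n) :
  map fst P = Slist M1 C1 ++ Slist M2 C2 -> Good P ->
  exists tau1 tau2 : D -> X,
   (forall d, inD d -> oplus (tau1 d) (tau2 d) = Some (tau d)) /\
   (forall T, cntok (cs_s C1 T) #|[set d | inD d && (tau1 d == T)]|) /\
   (forall T, cntok (cs_s C2 T) #|[set d | inD d && (tau2 d == T)]|).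
Proof.
move=> eP GP.
have csel k T q : 0 < k -> count (fun c => sel k T c && q c) (map fst P) =
   (if mk M1 == k then count (fun c => sel k T c && q c) (Xlist M1 T (cs_s C1 T)) else 0) +
   (if mk M2 == k then count (fun c => sel k T c && q c) (Xlist M2 T (cs_s C2 T)) else 0).
  by move=> k0; rewrite eP count_cat !count_Slist_sel.
have H3 d T : cnt P 3 T d = 0.
  apply/eqP; rewrite -leqn0; apply: leq_trans (cnt_le _ _ _ _) _.
  by rewrite (eq_count (a2 := fun c => sel 3 T c && true)) ?csel // => c; rewrite andbT.
have c2 d : inD d -> exists T1 T2, oplus T1 T2 = Some (tau d) /\
    forall T, cnt P 1 T d = (T == T1) :> nat /\ cnt P 2 T d = (T == T2) :> nat.
  move=> dD; case: (GP.2 d dD) => [H|[_ H]] //.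
  by case: (H (tau d)); rewrite H3 eqxx.
exists (tauk P 1), (tauk P 2); split; last split.
- move=> d dD; case: (c2 d dD) => T1 [T2 [Ho H]].
  rewrite (pick_eq (T1 := T1)) ?(pick_eq (k := 2) (T1 := T2)) // => T; by case: (H T).
- move=> T; apply: (cntok_gen (k := 1) GP).
  + move=> d dD; case: (c2 d dD) => T1 [T2 [Ho H]].
    rewrite (pick_eq (T1 := T1)); first by case: (H T) => -> _; rewrite eq_sym.
    by move=> T'; case: (H T').
  + by rewrite csel //= addn0 (count_X_one M1).
  + by move=> j ej; rewrite csel //= addn0; move: (count_X_any M1 T j); rewrite -ej.
- move=> T; apply: (cntok_gen (k := 2) GP).
  + move=> d dD; case: (c2 d dD) => T1 [T2 [Ho H]].
    rewrite (pick_eq (T1 := T2)); first by case: (H T) => _ ->; rewrite eq_sym.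
    by move=> T'; case: (H T').
  + by rewrite csel //= (count_X_one M2).
  + by move=> j ej; rewrite csel //=; move: (count_X_any M2 T j); rewrite -ej.
Qed.

Definition setokb (p : cj * {set D}) : bool :=
  (p.2 \subset inD) &&
  match p.1 with CGE => p.2 == set0 | COne _ _ => #|p.2| == 1 | CAny _ _ => true end.

Lemma setokbP p : setokb p -> setok p.
Proof. by case: p => [[|m T|m T] S] /andP[s1 s2]; split=> //; apply/eqP. Qed.

Lemma all_In (T0 : Type) (a : T0 -> bool) s x : all a s -> List.In x s -> a x.
Proof. by elim: s => //= y s IH /andP[ay al] [<-|Hx]; [|apply: IH]. Qed.

Lemma all_flatten' (T0 : Type) (a : T0 -> bool) (ss : seq (seq T0)) :
  all (all a) ss -> all a (flatten ss).
Proof. by elim: ss => //= s ss IH /andP[h1 h2]; rewrite all_cat h1 IH. Qed.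

Lemma map_fst_ones (T0 : Type) (c : cj) (f : T0 -> {set D}) s :
  map fst [seq (c, f e) | e <- s] = nseq (size s) c.
Proof. by elim: s => //= e s ->. Qed.

Section Build.
Variable C : cstar A F n.
Definition GT T : {set D} := [set d | inD d && (tau d == T)].
Definition Pblock T : seq (cj * {set D}) :=
  match cs_s C T with
  | CEq j => [seq (COne M12 T, [set e]) | e <- enum (GT T)] ++ [:: (cGE, set0)]
  | CGe p => [seq (COne M12 T, [set e]) | e <- take p (enum (GT T))] ++
             [:: (cGE, set0); (CAny M12 T, [set e in drop p (enum (GT T))])]
  end.
Definition Pall := flatten [seq Pblock T | T <- enum [set: X]].

Lemma cnt_block T' k T d : 0 < k ->
  cnt (Pblock T') k T d = ((k == 3) && (T' == T) && (d \in GT T')).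
Proof.
move=> k0; rewrite /Pblock /cnt.
have cm1 s : count (fun p : cj * {set D} => [&& cm p.1 == k, ctyp p.1 == T & d \in p.2])
    [seq (COne M12 T', [set e]) | e <- s] = ((k == 3) && (T' == T)) * count_mem d s.
  elim: s => //= [|e s ->]; first by rewrite muln0.
  rewrite mulnDr in_set1 (eq_sym e d) (eq_sym 3 k).
  by case: (k == 3); case: (T' == T); case: (d == e).
case: (cs_s C T') => j; rewrite count_cat cm1 /= in_set0 !andbF addn0.
  rewrite count_uniq_mem ?enum_uniq // (mem_enum (mem (GT T'))).
  by case: (k == 3); case: (T' == T); rewrite ?mul1n ?mul0n ?addn0.
rewrite inE (eq_sym 3 k) /=.
have e1 : count_mem d (take j (enum (GT T'))) + (d \in drop j (enum (GT T'))) = (d \in GT T').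
  have u := enum_uniq (GT T').
  rewrite -(count_uniq_mem _ (drop_uniq j u)) -count_cat cat_take_drop count_uniq_mem //.
  by rewrite (mem_enum (mem (GT T'))).
rewrite add0n; case: (k == 3); case: (T' == T) => /=; rewrite ?mul1n ?mul0n //.
Qed.

Lemma cnt_Pall k T d : 0 < k -> cnt Pall k T d = (k == 3) && (d \in GT T).
Proof.
move=> k0; rewrite /Pall /cnt count_flatten sumnE !big_map big_enum /=.
rewrite (bigD1 T) ?in_setT //= -/(cnt _ _ _ _) cnt_block // eqxx andbT.
suff -> : \sum_(T' in [set: X] | T' != T) count
    (fun p : cj * {set D} => [&& cm p.1 == k, ctyp p.1 == T & d \in p.2]) (Pblock T') = 0
  by rewrite addn0.
apply: big1 => T' /andP[_ ne]; rewrite -/(cnt _ _ _ _) cnt_block //.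
by rewrite (negbTE ne) andbF.
Qed.

Lemma build : (forall T, cntok (cs_s C T) #|GT T|) -> real (Slist M12 C).
Proof.
move=> Hc; exists Pall; split.
  rewrite /Pall /Slist; elim: (enum _) => //= T s IH; rewrite map_cat IH; congr cat.
  have := Hc T; rewrite /Pblock; case: (cs_s C T) => j /= H; rewrite map_cat map_fst_ones.
    by rewrite -cardE (eqP H).
  by rewrite size_takel // -cardE.
split.
  move=> p Hp; apply: setokbP; apply: (all_In _ Hp); apply: all_flatten'.
  rewrite all_map; apply/allP => T _ /=; rewrite /Pblock.
  have gin e : e \in GT T -> inD e by rewrite inE => /andP[].
  case: (cs_s C T) => j; rewrite all_cat all_map /=; apply/andP; split.
  - apply/allP => e he; rewrite /setokb /= cards1 eqxx andbT; apply: sub1p.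
    by apply: gin; move: he; rewrite (mem_enum (mem (GT T))).
  - by rewrite /setokb /= sub0p eqxx.
  - apply/allP => e he; rewrite /setokb /= cards1 eqxx andbT; apply: sub1p.
    by apply: gin; move: (mem_take he); rewrite (mem_enum (mem (GT T))).
  - rewrite /setokb /= eqxx !andbT; apply/andP; split; first exact: sub0p.
    apply/subsetP => e; rewrite inE => /mem_drop.
    by rewrite (mem_enum (mem (GT T))); apply: gin.
move=> d dD; left => T; rewrite !cnt_Pall //= inE dD /= eq_sym.
by split=> //; case: (_ == _).
Qed.
End Build.

End Comb.
Section Sem.
Variables (A F : finType) (n : nat) (xs : n.-tuple nat) (x : nat) (Hx : x \notin xs)
  (D : finType).
Notation X := {set xatom A F n}.

Lemma sat_bigAnd u b (r : nat -> D) (l : seq (form A F)) : sat u b r (bigAnd l) = all (sat u b r) l.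
Proof. by elim: l => //= g l ->. Qed.

Lemma sat_lit u b (r : nat -> D) bb (g : form A F) : sat u b r (lit bb g) = (sat u b r g == bb).
Proof. by case: bb => /=; case: (sat _ _ _ _). Qed.

Lemma upd_xs (r : nat -> D) d i : upd r x d (tnth xs i) = r (tnth xs i).
Proof.
rewrite /upd; case: eqP => // e; move: Hx; by rewrite -e mem_tnth.
Qed.

Lemma upd_x (r : nat -> D) d : upd r x d x = d.
Proof. by rewrite /upd eqxx. Qed.

Lemma all_enumT (T0 : finType) (a : pred T0) : all a (enum [set: T0]) = [forall t, a t].
Proof.
apply/allP/forallP => H t; first by apply: H; rewrite mem_enum in_setT.
by move=> _; apply: H.
Qed.

Lemma all_enumI (a : pred 'I_n) : all a (enum 'I_n) = [forall t, a t].
Proof.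
apply/allP/forallP => H t; first by apply: H; rewrite mem_enum.
by move=> _; apply: H.
Qed.

Lemma set_eqb (T0 : finType) (P : pred T0) (S : {set T0}) :
  ([set a | P a] == S) = [forall a, P a == (a \in S)].
Proof.
apply/eqP/forallP => [<- a|H]; first by rewrite inE.
by apply/setP => a; rewrite inE; apply/eqP.
Qed.

Definition inDx (r : nat -> D) (d : D) : bool := [forall i, d != r (tnth xs i)].
Definition tauE u b (r : nat -> D) (d : D) : X :=
  [set a | sat u b (upd r x d) (xatom_form xs x a)].

Lemma all_full (T0 : finType) (a : pred T0) s : (forall t, t \in s) -> all a s = [forall t, a t].
Proof.
move=> H; apply/allP/forallP => H' t; first by apply: H'.
by move=> _; apply: H'.
Qed.

Lemma sat_xform u b (r : nat -> D) d T :
  sat u b (upd r x d) (xform xs x T) = inDx r d && (tauE u b r d == T).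
Proof.
rewrite /xform sat_bigAnd !all_cat /= !all_map upd_x eqxx /=.
rewrite !(@all_full _ _ (Finite.enum _)) => [|t|t]; try by rewrite -?enumT mem_enum.
rewrite (@all_full _ _ (enum _)) => [|t]; last by rewrite mem_enum in_setT.
rewrite /tauE set_eqb /inDx.
have -> : [forall t : 'I_n, sat u b (upd r x d) (Not (Eq (tnth xs t) x))] =
          [forall t : 'I_n, sat u b (upd r x d) (Not (Eq x (tnth xs t)))].
  by apply: eq_forallb => i /=; rewrite eq_sym.
have -> : [forall t : 'I_n, sat u b (upd r x d) (Not (Eq x (tnth xs t)))] =
          [forall i : 'I_n, d != r (tnth xs i)].
  by apply: eq_forallb => i /=; rewrite upd_x upd_xs.
rewrite andbb andbC; congr andb; apply: eq_forallb => a /=; by rewrite sat_lit.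
Qed.

Definition injx (r : nat -> D) : bool :=
  [forall i, forall j, (r (tnth xs i) == r (tnth xs j)) == (i == j)].
Definition gtyp u b (r : nat -> D) : {set gatom A F n} := [set a | sat u b r (gatom_form xs a)].

Lemma sat_gform u b (r : nat -> D) P :
  sat u b r (gform xs P) = (gtyp u b r == P) && injx r.
Proof.
rewrite /gform sat_bigAnd all_cat all_map.
rewrite (@all_full _ _ (enum _)) => [|t]; last by rewrite mem_enum in_setT.
rewrite /gtyp set_eqb; congr andb; first by apply: eq_forallb => a /=; rewrite sat_lit.
apply/all_allpairsP/forallP => [H i|H i j _ _].
  by apply/forallP => j; have := H i j (mem_enum _ _) (mem_enum _ _); rewrite /= sat_lit.
by have := forallP (H i) j; rewrite /= sat_lit.
Qed.

End Sem.

Lemma comb_main (A F : finType) (n : nat) (D : finType) (inD : pred D)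
  (tau : D -> {set xatom A F n}) (C1 C2 C3 : cstar A F n) :
  ERes C1 C2 C3 -> (forall T, cntok (cs_s C3 T) #|GT inD tau T|) ->
  exists tau1 tau2 : D -> {set xatom A F n},
   (forall d, inD d -> oplus (tau1 d) (tau2 d) = Some (tau d)) /\
   (forall T, cntok (cs_s C1 T) #|[set d | inD d && (tau1 d == T)]|) /\
   (forall T, cntok (cs_s C2 T) #|[set d | inD d && (tau2 d == T)]|).
Proof.
case=> _ [H [dH iH]] Hc.
have r3 := build Hc.
have rH := ident_real iH r3.
have [P [eP GP]] := derives_real dH rH.
exact: extract eP GP.
Qed.

Lemma oplus_xor (T0 : finType) (T1 T2 T : {set T0}) a :
  oplus T1 T2 = Some T -> a \in T -> (a \in T2) = ~~ (a \in T1).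
Proof.
rewrite /oplus; case: ifP => // dj [<-]; rewrite in_setU.
case h1: (a \in T1) => /= h; last by rewrite h.
by rewrite (disjointFr dj h1).
Qed.

Lemma oplus_subl (T0 : finType) (T1 T2 T : {set T0}) :
  oplus T1 T2 = Some T -> T1 \subset T.
Proof. by rewrite /oplus; case: ifP => // _ [<-]; apply: subsetUl. Qed.

Lemma oplus_subr (T0 : finType) (T1 T2 T : {set T0}) :
  oplus T1 T2 = Some T -> T2 \subset T.
Proof. by rewrite /oplus; case: ifP => // _ [<-]; apply: subsetUr. Qed.

Lemma split_gen (T0 : finType) (S : {set T0}) (k1 k2 : pred T0) :
  (forall d, d \in S -> k2 d = ~~ k1 d) ->
  (S == [set d in S | k1 d] :|: [set d in S | k2 d]) &&
  [disjoint [set d in S | k1 d] & [set d in S | k2 d]].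
Proof.
move=> H; apply/andP; split.
  apply/eqP/setP => d; rewrite in_setU !inE.
  by case dS: (d \in S) => //=; rewrite H // orbN.
rewrite disjoint_subset; apply/subsetP => d; rewrite !inE => /andP[dS h1].
by rewrite H // h1 andbF.
Qed.

Section Env.
Variables (A F : finType) (n : nat) (xs : n.-tuple nat) (x : nat) (Hx : x \notin xs)
  (E : seq (nat * 'I_n)) (D : finType).
Notation X := {set xatom A F n}.
Notation G := {set gatom A F n}.

Lemma sat_Eform u b u' b' (r : nat -> D) :
  sat u b r (Eform A F xs E) = sat u' b' r (Eform A F xs E).
Proof. by rewrite /Eform; elim: E => //= e l ->. Qed.

Lemma sat_cs u b (r : nat -> D) (C : cstar A F n) :
  sat u b r (cs_form xs x E C) =
  [&& sat u b r (Eform A F xs E), (gtyp xs u b r == cs_F C) && injx xs r &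
      [forall T, cntok (cs_s C T) #|[set d | inDx xs r d && (tauE xs x u b r d == T)]|]].
Proof.
rewrite /cs_form /= sat_gform sat_bigAnd all_map.
rewrite (@all_full _ _ (enum _)) => [|t]; last by rewrite mem_enum in_setT.
congr andb; congr andb; apply: eq_forallb => T /=.
have ec : #|[set d | sat u b (upd r x d) (xform xs x T)]| =
          #|[set d | inDx xs r d && (tauE xs x u b r d == T)]|.
  by apply: eq_card => d; rewrite !inE (sat_xform Hx).
by case: (cs_s C T) => j /=; rewrite ec.
Qed.

End Env.

Section EnvB.
Variables (A F : finType) (n : nat) (xs : n.-tuple nat) (x : nat) (Hx : x \notin xs)
  (E : seq (nat * 'I_n)) (D : finType)
  (u : {ffun A -> {set D}}) (b : {ffun F -> {set D * D}}) (r : nat -> D).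
Notation X := {set xatom A F n}.
Notation G := {set gatom A F n}.

Definition pk (d : D) : option 'I_n := [pick i | d == r (tnth xs i)].

Lemma pk_xs i : injx xs r -> pk (r (tnth xs i)) = Some i.
Proof.
move=> inj; rewrite /pk; case: pickP => [j /eqP e|none].
  by move: (forallP (forallP inj i) j); rewrite e eqxx => /eqP h; congr Some; apply/eqP; rewrite eq_sym -h.
by move: (none i); rewrite eqxx.
Qed.

Lemma pk_in d : inDx xs r d -> pk d = None.
Proof.
move=> h; rewrite /pk; case: pickP => [j /eqP e|//].
by move: (forallP h j); rewrite e eqxx.
Qed.

Lemma pk_none d : pk d = None -> inDx xs r d.
Proof.
rewrite /pk; case: pickP => [//|none] _; apply/forallP => i; by rewrite none.
Qed.

Lemma pk_some d i : pk d = Some i -> d = r (tnth xs i).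
Proof. by rewrite /pk; case: pickP => [j /eqP e [<-]|]. Qed.

Definition keepU (Gs : G) (tk : D -> X) (p : A) (d : D) : bool :=
  match pk d with
  | Some i => (inl (p, i) : gatom A F n) \in Gs
  | None => (inl (inl (inl p)) : xatom A F n) \in tk d
  end.

Definition keepB (Gs : G) (tk : D -> X) (dflt : bool) (f : F) (de : D * D) : bool :=
  match pk de.1, pk de.2 with
  | Some i, Some j => (inr (f, (i, j)) : gatom A F n) \in Gs
  | None, Some j => (inl (inr (f, j)) : xatom A F n) \in tk de.1
  | Some i, None => (inr (f, i) : xatom A F n) \in tk de.2
  | None, None => if de.1 == de.2 then (inl (inl (inr f)) : xatom A F n) \in tk de.1 else dflt
  end.

Definition uE Gs tk : {ffun A -> {set D}} := [ffun p => [set d in u p | keepU Gs tk p d]].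
Definition bE Gs tk dflt : {ffun F -> {set D * D}} :=
  [ffun f => [set de in b f | keepB Gs tk dflt f de]].

Lemma gsem Gs tk dflt a : injx xs r ->
  sat (uE Gs tk) (bE Gs tk dflt) r (gatom_form xs a) = sat u b r (gatom_form xs a) && (a \in Gs).
Proof.
move=> inj; case: a => [[p i]|[f [i j]]] /=; rewrite ffunE inE.
  by rewrite /keepU pk_xs.
by rewrite /keepB /= !pk_xs.
Qed.

Lemma xsem Gs tk dflt d a : injx xs r -> inDx xs r d ->
  sat (uE Gs tk) (bE Gs tk dflt) (upd r x d) (xatom_form xs x a) =
  sat u b (upd r x d) (xatom_form xs x a) && (a \in tk d).
Proof.
move=> inj dD; case: a => [[[p|f]|[f i]]|[f i]] /=; rewrite ffunE inE ?upd_x ?(upd_xs Hx).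
- by rewrite /keepU (pk_in dD).
- by rewrite /keepB /= (pk_in dD) eqxx.
- by rewrite /keepB /= (pk_in dD) (pk_xs _ inj).
- by rewrite /keepB /= (pk_in dD) (pk_xs _ inj).
Qed.

Lemma env_sem (C : cstar A F n) (Gs : G) (tk : D -> X) dflt :
  injx xs r -> Gs \subset gtyp xs u b r ->
  (forall d, inDx xs r d -> tk d \subset tauE xs x u b r d) ->
  cs_F C = Gs ->
  (forall T, cntok (cs_s C T) #|[set d | inDx xs r d && (tk d == T)]|) ->
  sat u b r (Eform A F xs E) ->
  sat (uE Gs tk) (bE Gs tk dflt) r (cs_form xs x E C).
Proof.
move=> inj sG stk eF Hc HE.
rewrite (sat_cs Hx).
have -> : sat (uE Gs tk) (bE Gs tk dflt) r (Eform A F xs E) = sat u b r (Eform A F xs E)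
  by apply: sat_Eform.
rewrite HE inj eF andbT /=.
apply/andP; split.
  apply/eqP/setP => a; rewrite inE gsem //.
  case h: (a \in Gs); last by rewrite andbF.
  by rewrite andbT; move: (subsetP sG a h); rewrite inE.
apply/forallP => T.
have -> : #|[set d | inDx xs r d && (tauE xs x (uE Gs tk) (bE Gs tk dflt) r d == T)]| =
          #|[set d | inDx xs r d && (tk d == T)]|.
  apply: eq_card => d; rewrite !inE; case dD: (inDx xs r d) => //=.
  suff -> : tauE xs x (uE Gs tk) (bE Gs tk dflt) r d = tk d by [].
  apply/setP => a; rewrite /tauE inE xsem //.
  case h: (a \in tk d); last by rewrite andbF.
  by rewrite andbT; move: (subsetP (stk d dD) a h); rewrite inE.
exact: Hc.
Qed.

Lemma splitU_ok (F1 F2 : G) (tau1 tau2 : D -> X) :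
  oplus F1 F2 = Some (gtyp xs u b r) ->
  (forall d, inDx xs r d -> oplus (tau1 d) (tau2 d) = Some (tauE xs x u b r d)) ->
  splitU u (uE F1 tau1) (uE F2 tau2).
Proof.
move=> HF Ht; apply/forallP => p; rewrite !ffunE; apply: split_gen => d dp.
rewrite /keepU; case e: (pk d) => [i|].
  apply: (oplus_xor HF); rewrite inE /=; by rewrite -(pk_some e).
apply: (oplus_xor (Ht d (pk_none e))); by rewrite inE /= upd_x.
Qed.

Lemma splitB_ok (F1 F2 : G) (tau1 tau2 : D -> X) :
  oplus F1 F2 = Some (gtyp xs u b r) ->
  (forall d, inDx xs r d -> oplus (tau1 d) (tau2 d) = Some (tauE xs x u b r d)) ->
  splitB b (bE F1 tau1 true) (bE F2 tau2 false).
Proof.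
move=> HF Ht; apply/forallP => f; rewrite !ffunE; apply: split_gen => [[d1 d2]] dp.
rewrite /keepB /=; case e1: (pk d1) => [i|]; case e2: (pk d2) => [j|].
- apply: (oplus_xor HF); by rewrite inE /= -(pk_some e1) -(pk_some e2).
- apply: (oplus_xor (Ht _ (pk_none e2))); by rewrite inE /= upd_x (upd_xs Hx) -(pk_some e1).
- apply: (oplus_xor (Ht _ (pk_none e1))); by rewrite inE /= upd_x (upd_xs Hx) -(pk_some e2).
- case: eqP => [ed|//]; subst d2.
  apply: (oplus_xor (Ht _ (pk_none e1))); by rewrite inE /= upd_x.
Qed.

End EnvB.

Theorem lemma17 (A F : finType) (n : nat) (xs : n.-tuple nat) (x : nat)
  (E : seq (nat * 'I_n))
  (Hvars : uniq (x :: xs)) (HE : E_wf xs x E)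
  (C1 C2 : cstar A F n) (HC1 : cs_wf C1) (HC2 : cs_wf C2) :
  forall (C3 : cstar A F n), cs_wf C3 -> ERes C1 C2 C3 ->
  forall (D : finType) (u : {ffun A -> {set D}}) (b : {ffun F -> {set D * D}})
         (rho : nat -> D),
    sat u b rho (cs_form xs x E C3) ->
    sat u b rho (Star (cs_form xs x E C1) (cs_form xs x E C2)).
Proof.
move=> C3 _ HR D u b rho H3.
have Hx : x \notin xs by case/andP: Hvars.
rewrite (sat_cs Hx) in H3.
case/and3P: H3 => HEf /andP[/eqP eF3 inj] Hc3.
have [tau1 [tau2 [Ho [H1 H2]]]] :=
  comb_main (inD := inDx xs rho) (tau := tauE xs x u b rho) HR (fun T => forallP Hc3 T).
have HF : oplus (cs_F C1) (cs_F C2) = Some (gtyp xs u b rho) by rewrite eF3; case: HR.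
apply/existsP; exists (uE xs u rho (cs_F C1) tau1).
apply/existsP; exists (uE xs u rho (cs_F C2) tau2).
apply/existsP; exists (bE xs b rho (cs_F C1) tau1 true).
apply/existsP; exists (bE xs b rho (cs_F C2) tau2 false).
apply/and4P; split.
- exact: (splitU_ok HF Ho).
- exact: (splitB_ok Hx HF Ho).
- apply: (env_sem Hx) => //; first exact: (oplus_subl HF).
    by move=> d dD; apply: (oplus_subl (Ho d dD)).
- apply: (env_sem Hx) => //; first exact: (oplus_subr HF).
    by move=> d dD; apply: (oplus_subr (Ho d dD)).
Qed.
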